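(* Let $G$ be an abelian group and $E$ a real Banach space. Then $PJ(G;E)=\mathrm{Hom}(G;E)$.
   Context: $PJ(G;E)$ is the set of functions $f\colon G\to E$ such that there is $c>0$ with $\|f(xy)+f(xy^{-1})-2f(x)\|\le c$ for all $x,y\in G$ and $f(x^n)=nf(x)$ for all $x\in G$, $n\in\mathbb{Z}$. $\mathrm{Hom}(G;E)$ is the set of homomorphisms from $G$ to the additive group of $E$. *)

(* Defs.v *)
From HB Require Import structures.
From mathcomp Require Import all_boot all_order all_algebra.
From mathcomp Require Import all_classical all_reals all_analysis.
Set Implicit Arguments. Unset Strict Implicit. Unset Printing Implicit Defensive.
Import Order.TTheory GRing.Theory Num.Theory.
Import numFieldNormedType.Exports.
Local Open Scope ring_scope.

(* The abelian group G is written additively (zmodType): xy becomes x + y,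
   xy^{-1} becomes x - y, x^n becomes x *~ n. *)

Definition PJ (G : zmodType) (R : realType) (E : normedModType R)
  (f : G -> E) : Prop :=
  (exists c : R, 0 < c /\
     forall x y : G, `|f (x + y) + f (x - y) - (f x) *+ 2| <= c) /\
  (forall (x : G) (n : int), f (x *~ n) = (f x) *~ n).

Definition HomGE (G : zmodType) (R : realType) (E : normedModType R)
  (f : G -> E) : Prop :=
  forall x y : G, f (x + y) = f x + f y.

(* Main.v *)
Require Import Defs.
From HB Require Import structures.
From mathcomp Require Import all_boot all_order all_algebra.
From mathcomp Require Import all_classical all_reals all_analysis.
Import Order.TTheory GRing.Theory Num.Theory.
Import numFieldNormedType.Exports.
Local Open Scope ring_scope.

Lemma hom_natmul {G E : zmodType} {f : G -> E} :
  (forall x y, f (x + y) = f x + f y) -> forall x n, f (x *+ n) = f x *+ n.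
Proof.
move=> H x; elim=> [|n IH].
  by rewrite !mulr0n; apply: (addrI (f 0)); rewrite addr0 -H addr0.
by rewrite !mulrS H IH.
Qed.

Lemma hom_opp {G E : zmodType} {f : G -> E} :
  (forall x y, f (x + y) = f x + f y) -> forall x, f (- x) = - f x.
Proof.
move=> H x; have h0 : f 0 = 0 by have := hom_natmul H x 0; rewrite !mulr0n.
apply/eqP; rewrite -subr_eq0 opprK -H addNr h0 //.
Qed.

Lemma ident {V : zmodType} (A p q r : V) :
  (A - p - q) *+ 2 = (A + r - p *+ 2) + (A + - r - q *+ 2).
Proof.
rewrite !mulr2n !opprD !addrA.
rewrite (addrAC A r) (addrAC _ r) (addrAC _ r) addrK.
by rewrite (addrAC (A - p) (-q) A) (addrAC (A - p + A) (-q) (-p)) (addrAC (A - p) (-p) A).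
Qed.

Theorem corollary2p17 (G : zmodType) (R : realType)
  (E : completeNormedModType R) (f : G -> E) :
  PJ f <-> HomGE f.
Proof.
split.
- move=> [[c [c0 Hc]] Hh] x y.
  have fN : forall z, f (- z) = - f z.
    by move=> z; rewrite -mulrN1z Hh mulrN1z.
  have fn : forall z n, f (z *+ n) = f z *+ n.
    by move=> z n; rewrite -mulrz_nat Hh mulrz_nat.
  have QA : forall a b, `|f (a + b) - f a - f b| <= c.
    move=> a b.
    have h1 := Hc a b; have h2 := Hc b a.
    have e : (f (a + b) - f a - f b) *+ 2 =
      (f (a + b) + f (a - b) - f a *+ 2) + (f (b + a) + f (b - a) - f b *+ 2).
      by rewrite -(opprB a b) fN (addrC b a) (ident (f (a + b)) (f a) (f b) (f (a - b))).
    have : `|(f (a + b) - f a - f b) *+ 2| <= c *+ 2.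
      by rewrite e mulr2n; apply: le_trans (ler_normD _ _) _; apply: lerD.
    by rewrite normrMn ler_pMn2r.
  set D := f (x + y) - f x - f y.
  have Dn : forall n : nat, `|D| *+ n <= c.
    move=> n; have := QA (x *+ n) (y *+ n).
    by rewrite -mulrnDl !fn -!mulrnBl normrMn.
  apply/eqP; rewrite -subr_eq0 opprD addrA -/D -normr_eq0.
  apply/negPn/negP => Dne.
  have Dp : 0 < `|D| by rewrite lt_neqAle eq_sym Dne normr_ge0.
  have hb := @archi_boundP R (c / `|D|) (divr_ge0 (ltW c0) (normr_ge0 _)).
  have := Dn (Num.Def.archi_bound (c / `|D|)).
  rewrite -mulr_natr -ler_pdivlMl // => h; rewrite [X in _ <= X]mulrC in h.
  by have := lt_le_trans hb h; rewrite ltxx.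
- move=> H; split.
    exists 1; split; first exact: ltr01.
    move=> x y; rewrite !H hom_opp // mulr2n.
    have -> : f x + f y + (f x + - f y) - (f x + f x) = 0.
      by rewrite addrACA subrr addr0 subrr.
    by rewrite normr0 ler01.
  move=> x [] n.
    by rewrite -(pmulrn x n) -(pmulrn (f x) n) hom_natmul.
  by rewrite NegzE !mulrNz hom_opp // -(pmulrn x n.+1) -(pmulrn (f x) n.+1) hom_natmul.
Qed.
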